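(* Let $\mathcal T$ be a locally finite partial tessellation of ${\mathbb X}$. Every side of $\mathcal T$ is contained in exactly two tiles of $\mathcal T$, and it is equal to the intersection of these two tiles.
   Context: ${\mathbb X}$ is $\mathbb R^n$, the unit sphere $\mathbb S^n$, or hyperbolic $n$-space. A subspace is a complete totally geodesic submanifold; a hyperplane is a subspace of codimension 1; closed half-spaces are the closures of the two components of the complement of a hyperplane. A polyhedron is a nonempty intersection of a family of closed half-spaces whose boundary hyperplanes form a locally finite family; its codimension is the codimension of the smallest subspace containing it, and its relative interior $C^r$ is its interior in that subspace. It is thick if it has nonempty interior in ${\mathbb X}$. A partial tessellation is a set of thick polyhedra (tiles) with pairwise disjoint interiors; locally finite means every compact set meets only finitely many tiles. A cell of $\mathcal T$ is a nonempty intersection $C$ of tiles such that for every tile $T$ either $C\subseteq T$ or $C^r\cap T=\emptyset$; a side is a cell of codimension 1. *)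

(* Defs.v *)
From HB Require Import structures.
From mathcomp Require Import all_boot all_order all_algebra.
From mathcomp Require Import all_classical all_reals all_analysis.

Set Implicit Arguments.
Unset Strict Implicit.
Unset Printing Implicit Defensive.

Import Order.TTheory GRing.Theory Num.Theory.
Import numFieldNormedType.Exports.
Local Open Scope classical_set_scope.
Local Open Scope ring_scope.

(* The three model geometries, all realised inside R^(n+1) = 'rV[R]_(n.+1):
   - Euclidean n-space: the affine hyperplane  x_0 = 1;
   - the unit sphere S^n: { x | x.x = 1 };
   - hyperbolic n-space: upper sheet of the hyperboloid
       -x_0^2 + x_1^2 + ... + x_n^2 = -1,  x_0 > 0.
   In each model the subspaces (complete totally geodesic submanifolds)
   are exactly the nonempty sets  X \cap U  with U a linear subspace of
   R^(n+1), and the topology of X is the one induced by R^(n+1). *)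
Inductive geometry := Euclidean | Spherical | Hyperbolic.

Section Geometry.
Variable R : realType.
Variable g : geometry.
Variable n : nat.

Notation V := 'rV[R]_(n.+1).

Definition dotv (a x : V) : R := \sum_(i < n.+1) a ord0 i * x ord0 i.

Definition model : set V :=
  match g with
  | Euclidean => [set x | x ord0 ord0 = 1]
  | Spherical => [set x | dotv x x = 1]
  | Hyperbolic => [set x | dotv x x - 2 * (x ord0 ord0) ^+ 2 = -1 /\
                           0 < x ord0 ord0]
  end.

(* subspaces of X; the dimension of model `&` U is \dim U - 1 *)
Definition subspace (S : set V) : Prop :=
  exists U : {vspace V}, S = model `&` [set x | x \in U] /\ S !=set0.

Definition hyperplane (S : set V) : Prop :=
  exists U : {vspace V}, S = model `&` [set x | x \in U] /\ S !=set0 /\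
    \dim U = n.

(* the hyperplane  X \cap {a.x = 0}  and the closed half-space X \cap {a.x >= 0}
   (closure of the component X \cap {a.x > 0} of X minus the hyperplane) *)
Definition bnd (a : V) : set V := model `&` [set x | dotv a x = 0].
Definition halfsp (a : V) : set V := model `&` [set x | 0 <= dotv a x].

Definition cpt (K : set V) : Prop := K `<=` model /\ compact K.

Definition polyhedron (P : set V) : Prop :=
  exists A : set V,
    (forall a, A a -> a != 0 /\ hyperplane (bnd a)) /\
    (forall K, cpt K ->
       finite_set [set H : set V | exists a, A a /\ H = bnd a /\
                                             H `&` K !=set0]) /\
    P = model `&` [set x | forall a, A a -> 0 <= dotv a x] /\
    P !=set0.

Definition intX (A : set V) : set V :=
  [set x | A x /\ exists e : R, 0 < e /\
     forall y, model y -> dotv (y - x) (y - x) < e * e -> A y].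

Definition thick (P : set V) : Prop := intX P !=set0.

(* U is the smallest linear subspace containing C; then model `&` U is
   the smallest subspace of X containing C (for nonempty C in X) *)
Definition is_hull (C : set V) (U : {vspace V}) : Prop :=
  (forall x, C x -> x \in U) /\
  (forall U' : {vspace V}, (forall x, C x -> x \in U') -> (U <= U')%VS).

Definition codim_is (C : set V) (k : nat) : Prop :=
  exists U, is_hull C U /\ k = (n.+1 - \dim U)%N.

Definition relint (C : set V) : set V :=
  [set x | exists U, is_hull C U /\ C x /\ exists e : R, 0 < e /\
     forall y, model y -> y \in U -> dotv (y - x) (y - x) < e * e -> C y].

Definition partial_tessellation (T : set (set V)) : Prop :=
  (forall P, T P -> polyhedron P /\ thick P) /\
  (forall P Q, T P -> T Q -> P <> Q -> intX P `&` intX Q = set0).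

Definition locally_finite (T : set (set V)) : Prop :=
  forall K, cpt K -> finite_set [set P | T P /\ P `&` K !=set0].

Definition cell (T : set (set V)) (C : set V) : Prop :=
  (exists F : set (set V), F `<=` T /\ F !=set0 /\
     C = [set x | forall P, F P -> P x]) /\
  C !=set0 /\
  (forall P, T P -> C `<=` P \/ relint C `&` P = set0).

Definition side (T : set (set V)) (C : set V) : Prop :=
  cell T C /\ codim_is C 1.

End Geometry.

(* Main.v *)
Require Import Defs.
From HB Require Import structures.
From mathcomp Require Import all_boot all_order all_algebra.
From mathcomp Require Import all_classical all_reals all_analysis.
From mathcomp Require Import ring lra.
Import Order.TTheory GRing.Theory Num.Theory.
Import numFieldNormedType.Exports.
Local Open Scope classical_set_scope.
Local Open Scope ring_scope.
Set Implicit Arguments.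
Unset Strict Implicit.
Unset Printing Implicit Defensive.
Lemma dotvC (R : realType) (n : nat) (x y : 'rV[R]_n.+1) : dotv x y = dotv y x.
Proof. by rewrite /dotv; apply: eq_bigr => i _; rewrite mulrC. Qed.

Lemma dotvDr (R : realType) (n : nat) (a x y : 'rV[R]_n.+1) :
  dotv a (x + y) = dotv a x + dotv a y.
Proof. by rewrite /dotv -big_split; apply: eq_bigr => i _; rewrite mxE mulrDr. Qed.

Lemma dotvZr (R : realType) (n : nat) (a x : 'rV[R]_n.+1) c :
  dotv a (c *: x) = c * dotv a x.
Proof. by rewrite /dotv mulr_sumr; apply: eq_bigr => i _; rewrite mxE mulrCA. Qed.

Lemma dotvNr (R : realType) (n : nat) (a x : 'rV[R]_n.+1) :
  dotv a (- x) = - dotv a x.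
Proof. by rewrite -scaleN1r dotvZr mulN1r. Qed.

Lemma dotvBr (R : realType) (n : nat) (a x y : 'rV[R]_n.+1) :
  dotv a (x - y) = dotv a x - dotv a y.
Proof. by rewrite dotvDr dotvNr. Qed.

Lemma dotvDl (R : realType) (n : nat) (a x y : 'rV[R]_n.+1) :
  dotv (x + y) a = dotv x a + dotv y a.
Proof. by rewrite dotvC dotvDr !(dotvC a). Qed.

Lemma dotvZl (R : realType) (n : nat) (a x : 'rV[R]_n.+1) c :
  dotv (c *: x) a = c * dotv x a.
Proof. by rewrite dotvC dotvZr dotvC. Qed.

Lemma dotvNl (R : realType) (n : nat) (a x : 'rV[R]_n.+1) :
  dotv (- x) a = - dotv x a.
Proof. by rewrite dotvC dotvNr dotvC. Qed.

Lemma dotvBl (R : realType) (n : nat) (a x y : 'rV[R]_n.+1) :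
  dotv (x - y) a = dotv x a - dotv y a.
Proof. by rewrite dotvDl dotvNl. Qed.

Lemma dotv0r (R : realType) (n : nat) (a : 'rV[R]_n.+1) : dotv a 0 = 0.
Proof. by rewrite -(scale0r 0) dotvZr mul0r. Qed.

Lemma dotv_sumr (R : realType) (n m : nat) (a : 'rV[R]_n.+1) (F : 'I_m -> 'rV[R]_n.+1) :
  dotv a (\sum_(i < m) F i) = \sum_(i < m) dotv a (F i).
Proof.
elim/big_rec2: _ => [|i y1 y2 _ <-]; first exact: dotv0r.
by rewrite dotvDr.
Qed.

Lemma dotv_ge0 (R : realType) (n : nat) (x : 'rV[R]_n.+1) : 0 <= dotv x x.
Proof. by apply: sumr_ge0 => i _; rewrite -expr2 sqr_ge0. Qed.

Lemma dotv_comp (R : realType) (n : nat) (x : 'rV[R]_n.+1) j :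
  x ord0 j ^+ 2 <= dotv x x.
Proof.
rewrite /dotv (bigD1 j) //= -expr2 lerDl.
by apply: sumr_ge0 => i _; rewrite -expr2 sqr_ge0.
Qed.

Lemma dotv_eq0 (R : realType) (n : nat) (x : 'rV[R]_n.+1) : dotv x x = 0 -> x = 0.
Proof.
move=> h; apply/rowP => j; rewrite mxE.
have := dotv_comp x j; rewrite h => hj.
have : x ord0 j ^+ 2 = 0 by apply/eqP; rewrite eq_le hj sqr_ge0.
by move/eqP; rewrite sqrf_eq0 => /eqP.
Qed.

Definition kone (R : realType) (n : nat) (A : set 'rV[R]_n.+1) : set 'rV[R]_n.+1 :=
  [set x | forall a, A a -> 0 <= dotv a x].

Lemma kone0 (R : realType) (n : nat) (A : set 'rV[R]_n.+1) : kone A 0.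
Proof. by move=> a _; rewrite dotv0r. Qed.

Lemma koneD (R : realType) (n : nat) (A : set 'rV[R]_n.+1) x y :
  kone A x -> kone A y -> kone A (x + y).
Proof. by move=> hx hy a Aa; rewrite dotvDr addr_ge0 // ?hx ?hy. Qed.

Lemma koneZ (R : realType) (n : nat) (A : set 'rV[R]_n.+1) x c :
  0 <= c -> kone A x -> kone A (c *: x).
Proof. by move=> c0 hx a Aa; rewrite dotvZr mulr_ge0 // hx. Qed.

Definition cg (R : realType) (g : geometry) (n : nat) (y : 'rV[R]_n.+1) : Prop :=
  match g with
  | Euclidean => 0 < y ord0 ord0
  | Spherical => y != 0
  | Hyperbolic => dotv y y - 2 * (y ord0 ord0) ^+ 2 < 0 /\ 0 < y ord0 ord0
  end.

Lemma model_cg (R : realType) (g : geometry) (n : nat) (y : 'rV[R]_n.+1) :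
  model g y -> cg g y.
Proof.
case: g => /=.
- by move=> ->.
- move=> h; apply/eqP => y0; move: h; rewrite y0 dotv0r => /eqP.
  by rewrite eq_sym oner_eq0.
- by move=> [-> ->]; split => //; rewrite ltrN10.
Qed.

Lemma cg_norm (R : realType) (g : geometry) (n : nat) (y : 'rV[R]_n.+1) :
  cg g y -> exists c, 0 < c /\ model g (c *: y).
Proof.
case: g => /=.
- move=> h; exists (y ord0 ord0)^-1; split; first by rewrite invr_gt0.
  by rewrite mxE mulVf // gt_eqF.
- move=> h; have d0 : 0 < dotv y y.
    by rewrite lt_def dotv_ge0 andbT; apply/eqP => /dotv_eq0 /eqP; rewrite (negbTE h).
  exists (Num.sqrt (dotv y y))^-1; split; first by rewrite invr_gt0 sqrtr_gt0.
  rewrite dotvZr dotvZl mulrA -expr2 exprVn sqr_sqrtr ?mulVf ?gt_eqF //.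
  exact: ltW.
- move=> [h1 h2]; set d := - (dotv y y - 2 * y ord0 ord0 ^+ 2).
  have d0 : 0 < d by rewrite /d oppr_gt0.
  exists (Num.sqrt d)^-1; split; first by rewrite invr_gt0 sqrtr_gt0.
  have hs : (Num.sqrt d)^-1 ^+ 2 * d = 1.
    by rewrite exprVn sqr_sqrtr ?mulVf ?gt_eqF // ltW.
  split; last by rewrite mxE mulr_gt0 // invr_gt0 sqrtr_gt0.
  rewrite dotvZr dotvZl mxE mulrA exprMn.
  have -> : dotv y y = 2 * y ord0 ord0 ^+ 2 - d by rewrite /d opprK addrC subrK.
  rewrite -expr2; move: hs; set c := _ ^+ 2 => hs.
  by rewrite mulrBr -hs; ring.
Qed.

Lemma lor_neg (R : realType) (n : nat) (x y : 'rV[R]_n.+1) :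
  dotv x x - 2 * (x ord0 ord0) ^+ 2 < 0 -> 0 < x ord0 ord0 ->
  dotv y y - 2 * (y ord0 ord0) ^+ 2 < 0 -> 0 < y ord0 ord0 ->
  dotv x y < 2 * (x ord0 ord0 * y ord0 ord0).
Proof.
move=> hx x0 hy y0.
set l := y ord0 ord0 / x ord0 ord0.
have l0 : 0 < l by rewrite divr_gt0.
have lx : l * x ord0 ord0 = y ord0 ord0 by rewrite /l mulfVK // gt_eqF.
have h := dotv_ge0 (l *: x - y).
rewrite dotvBl !dotvBr !dotvZl !dotvZr (dotvC y x) in h.
set a := dotv x x in hx h; set b := dotv y y in hy h; set c := dotv x y in h *.
set x0' := x ord0 ord0 in x0 hx lx *; set y0' := y ord0 ord0 in y0 hy lx *.
have h1 : 2 * l * c <= l * (l * a) + b by lra.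
have h2 : l * (l * a) < l * (l * (2 * x0' ^+ 2)).
  by rewrite ltr_pM2l // ltr_pM2l // -subr_gt0; lra.
have h3 : l * (l * (2 * x0' ^+ 2)) = 2 * y0' ^+ 2 by rewrite -lx; ring.
have h4 : 2 * l * c < 4 * y0' ^+ 2 by lra.
have h5 : 4 * y0' ^+ 2 = 2 * l * (2 * (x0' * y0')) by rewrite -lx; ring.
have h6 : 2 * l * c < 2 * l * (2 * (x0' * y0')) by rewrite -h5.
have l2 : 0 < 2 * l by rewrite mulr_gt0.
by move: h6; rewrite ltr_pM2l.
Qed.

Lemma cg_add (R : realType) (g : geometry) (n : nat) (x y : 'rV[R]_n.+1) :
  g <> Spherical -> cg g x -> cg g y -> cg g (x + y).
Proof.
case: g => //= _.
- by move=> hx hy; rewrite mxE addr_gt0.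
- move=> [hx x0] [hy y0]; have := lor_neg hx x0 hy y0.
  rewrite !dotvDl !dotvDr (dotvC y x) mxE; split; last by rewrite addr_gt0.
  move: hx hy H; set a := dotv x x; set b := dotv y y; set c := dotv x y.
  set u := x ord0 ord0; set v := y ord0 ord0 => hx hy hc.
  have -> : a + c + (c + b) - 2 * (u + v) ^+ 2 =
     (a - 2 * u ^+ 2) + (b - 2 * v ^+ 2) + 2 * (c - 2 * (u * v)) by ring.
  lra.
Qed.

Lemma cg_scale (R : realType) (g : geometry) (n : nat) (x : 'rV[R]_n.+1) c :
  0 < c -> cg g x -> cg g (c *: x).
Proof.
case: g => /= c0.
- by move=> hx; rewrite mxE mulr_gt0.
- by move=> hx; rewrite scaler_eq0 negb_or gt_eqF.
- move=> [hx x0]; rewrite dotvZl dotvZr mxE; split; last by rewrite mulr_gt0.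
  have -> : c * (c * dotv x x) - 2 * (c * x ord0 ord0) ^+ 2 =
     c ^+ 2 * (dotv x x - 2 * x ord0 ord0 ^+ 2) by ring.
  by rewrite pmulr_rlt0 // exprn_gt0.
Qed.

Lemma choose_t (R : realType) (a K v0 q0 e : R) :
  0 < q0 -> 0 < e -> 0 <= K ->
  exists t, [/\ 0 < t, t <= 1, t ^+ 2 * `|a| <= 1 / 2, 12 * t * `|v0| < q0
              & 32 * t ^+ 2 * K < e ^+ 2].
Proof.
move=> q0p ep K0.
have a0 := normr_ge0 a; have v00 := normr_ge0 v0.
set t1 := 1 / (2 * (`|a| + 1)).
set t2 := q0 / (24 * (`|v0| + 1)).
set t3 := e / (6 * (K + 1)).
have t1p : 0 < t1 by rewrite /t1 divr_gt0 // mulr_gt0 //; lra.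
have t2p : 0 < t2 by rewrite /t2 divr_gt0 // mulr_gt0 //; lra.
have t3p : 0 < t3 by rewrite /t3 divr_gt0 // mulr_gt0 //; lra.
have tp : 0 < Num.min 1 (Num.min t1 (Num.min t2 t3)).
  by rewrite !lt_min t1p t2p t3p ltr01.
have hh : Num.min 1 (Num.min t1 (Num.min t2 t3)) <= 1 /\
   Num.min 1 (Num.min t1 (Num.min t2 t3)) <= t1 /\
   Num.min 1 (Num.min t1 (Num.min t2 t3)) <= t2 /\
   Num.min 1 (Num.min t1 (Num.min t2 t3)) <= t3.
  by rewrite !ge_min !lexx !orbT.
exists (Num.min 1 (Num.min t1 (Num.min t2 t3))).
move: tp hh; set t := Num.min _ _ => tp [h1 [h2 [h3 h4]]].
have e1 : t * (2 * (`|a| + 1)) <= 1.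
  by rewrite -ler_pdivlMr // mulr_gt0 //; lra.
have e2 : t * (24 * (`|v0| + 1)) <= q0.
  by rewrite -ler_pdivlMr // mulr_gt0 //; lra.
have e3 : t * (6 * (K + 1)) <= e.
  by rewrite -ler_pdivlMr // mulr_gt0 //; lra.
split => //.
- nra.
- nra.
- have e4 : (t * (6 * (K + 1))) ^+ 2 <= e ^+ 2.
    by rewrite lerXn2r // ?nnegrE //; nra.
  nra.
Qed.

Lemma dotv_comb (R : realType) (n : nat) (q v : 'rV[R]_n.+1) al be :
  dotv (al *: q + be *: v) (al *: q + be *: v) =
  al ^+ 2 * dotv q q + 2 * (al * be) * dotv q v + be ^+ 2 * dotv v v.
Proof. rewrite !dotvDl !dotvDr !dotvZl !dotvZr (dotvC v q); ring. Qed.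

Lemma dist_bound (R : realType) (n : nat) (q v : 'rV[R]_n.+1) al be t a :
  0 <= t -> t <= 1 ->
  (al - 1) ^+ 2 <= 16 * t ^+ 4 * a ^+ 2 -> be ^+ 2 <= 16 * t ^+ 2 ->
  dotv (al *: q + be *: v - q) (al *: q + be *: v - q) <=
  32 * t ^+ 2 * (a ^+ 2 * dotv q q + dotv v v).
Proof.
move=> t0 t1 ha hb.
have -> : al *: q + be *: v - q = (al - 1) *: q + be *: v.
  by rewrite scalerBl scale1r addrAC.
rewrite dotv_comb.
have h := dotv_ge0 ((al - 1) *: q - be *: v).
rewrite -scaleNr dotv_comb in h.
have q0 := dotv_ge0 q; have v0 := dotv_ge0 v.
have h1 : (al - 1) ^+ 2 * dotv q q <= 16 * t ^+ 2 * a ^+ 2 * dotv q q.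
  apply: ler_wpM2r => //; apply: (le_trans ha).
  have : t ^+ 4 <= t ^+ 2.
    by rewrite -(mulr1 (t ^+ 2)) (exprD _ 2 2) ler_wpM2l ?exprn_ge0 // expr_le1.
  by move=> h4; rewrite -mulrA -(mulrA 16) ler_wpM2l // ler_wpM2r // sqr_ge0.
have h2 : be ^+ 2 * dotv v v <= 16 * t ^+ 2 * dotv v v by apply: ler_wpM2r.
nra.
Qed.

Lemma sq_div_le (R : realType) (x d c : R) :
  0 < c -> c <= d -> (x / d) ^+ 2 <= x ^+ 2 / c ^+ 2.
Proof.
move=> c0 cd; have d0 : 0 < d by apply: lt_le_trans cd.
rewrite expr_div_n ler_wpM2l ?sqr_ge0 //.
rewrite lef_pV2 ?posrE ?exprn_gt0 //; nra.
Qed.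

Definition tang (R : realType) (g : geometry) (n : nat) (q v : 'rV[R]_n.+1) : Prop :=
  match g with
  | Euclidean => v ord0 ord0 = 0
  | Spherical => dotv q v = 0
  | Hyperbolic => dotv q v - 2 * (q ord0 ord0 * v ord0 ord0) = 0
  end.

Lemma near_pts (R : realType) (g : geometry) (n : nat) (q v : 'rV[R]_n.+1) e :
  model g q -> 0 < e -> tang g q v ->
  exists al be, be != 0 /\ model g (al *: q + be *: v) /\
    dotv (al *: q + be *: v - q) (al *: q + be *: v - q) < e * e.
Proof.
move=> mq e0 tq.
have qq0 := dotv_ge0 q; have vv0 := dotv_ge0 v.
case: g mq tq => /= mq tq.
- have [t [t0 t1 _ _ ht]] := @choose_t R 0 (dotv v v) 0 1 e ltr01 e0 vv0.
  exists 1, t; split; first by rewrite gt_eqF.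
  split; first by rewrite !mxE mq tq mulr0 mulr1 addr0.
  apply: (le_lt_trans (dist_bound q v (ltW t0) t1 (a := 0) _ _)).
  + by rewrite subrr expr0n /= mulr0.
  + by rewrite ler_peMl ?sqr_ge0 //; lra.
  + by rewrite expr0n /= mul0r add0r -expr2.
- set a := dotv v v.
  have [t [t0 t1 ta _ ht]] := @choose_t R a (a ^+ 2 * dotv q q + a) 0 1 e ltr01 e0
     (addr_ge0 (mulr_ge0 (sqr_ge0 _) qq0) vv0).
  have a0 : 0 <= a := vv0.
  have d1 : 1 <= 1 + t ^+ 2 * a by rewrite lerDl mulr_ge0 // sqr_ge0.
  have d0 : 1 + t ^+ 2 * a != 0 by rewrite gt_eqF // (lt_le_trans ltr01 d1).
  exists ((1 - t ^+ 2 * a) / (1 + t ^+ 2 * a)), (2 * t / (1 + t ^+ 2 * a)).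
  split; first by rewrite mulf_neq0 ?invr_eq0 // mulf_neq0 // gt_eqF.
  split.
    by rewrite dotv_comb mq tq -/a; field.
  apply: (le_lt_trans (dist_bound q v (ltW t0) t1 (a := a) _ _)); last by rewrite -expr2.
  + have -> : (1 - t ^+ 2 * a) / (1 + t ^+ 2 * a) - 1 = (- (2 * t ^+ 2 * a)) / (1 + t ^+ 2 * a).
      by field.
    apply: (le_trans (sq_div_le _ ltr01 d1)); rewrite expr1n divr1 sqrrN.
    have := sqr_ge0 (t ^+ 2 * a); nra.
  + apply: (le_trans (sq_div_le _ ltr01 d1)); rewrite expr1n divr1; nra.
- move: mq => [mq q0]; set a := dotv v v - 2 * v ord0 ord0 ^+ 2.
  have [t [t0 t1 ta tv ht]] := @choose_t R a (a ^+ 2 * dotv q q + dotv v v)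
     (v ord0 ord0) (q ord0 ord0) e q0 e0 (addr_ge0 (mulr_ge0 (sqr_ge0 _) qq0) vv0).
  have hta : t ^+ 2 * a <= 1 / 2.
    apply: le_trans ta; rewrite ler_wpM2l ?sqr_ge0 //; exact: ler_norm.
  have hta' : - (1 / 2) <= t ^+ 2 * a.
    have : - (t ^+ 2 * `|a|) <= t ^+ 2 * a.
      rewrite -mulrN ler_wpM2l ?sqr_ge0 //; have := ler_norm (- a); rewrite normrN; lra.
    lra.
  have d1 : 1 / 2 <= 1 - t ^+ 2 * a by lra.
  have dp : 0 < 1 - t ^+ 2 * a by lra.
  have d0 : 1 - t ^+ 2 * a != 0 by rewrite gt_eqF.
  exists ((1 + t ^+ 2 * a) / (1 - t ^+ 2 * a)), (2 * t / (1 - t ^+ 2 * a)).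
  split; first by rewrite mulf_neq0 ?invr_eq0 // mulf_neq0 // gt_eqF.
  split; first split.
  + rewrite dotv_comb !mxE.
    have -> : dotv q q = 2 * q ord0 ord0 ^+ 2 - 1 by lra.
    have -> : dotv q v = 2 * (q ord0 ord0 * v ord0 ord0) by lra.
    have -> : dotv v v = a + 2 * v ord0 ord0 ^+ 2 by rewrite /a; ring.
    by field.
  + rewrite !mxE.
    set al := _ / _; set be := _ / _.
    have hal : 1 / 3 <= al.
      rewrite /al ler_pdivlMr //; lra.
    have hbe : `|be| <= 4 * t.
      rewrite ger0_norm /be; last by rewrite divr_ge0 // ?mulr_ge0 // ltW.
      rewrite ler_pdivrMr //; nra.
    have : `|be * v ord0 ord0| <= 4 * t * `|v ord0 ord0|.
      by rewrite normrM; apply: ler_wpM2r.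
    have := ler_norm (- (be * v ord0 ord0)); rewrite normrN.
    have : al * q ord0 ord0 >= 1 / 3 * q ord0 ord0 by apply: ler_wpM2r => //; exact: ltW.
    lra.
  + apply: (le_lt_trans (dist_bound q v (ltW t0) t1 (a := a) _ _)); last by rewrite -expr2.
    * have -> : (1 + t ^+ 2 * a) / (1 - t ^+ 2 * a) - 1 = (2 * t ^+ 2 * a) / (1 - t ^+ 2 * a).
        by field.
      have hhalf : 0 < 1 / 2 :> R by lra.
      apply: (le_trans (sq_div_le _ hhalf d1)).
      rewrite le_eqVlt; apply/orP; left; apply/eqP; by field.
    * have hhalf : 0 < 1 / 2 :> R by lra.
      apply: (le_trans (sq_div_le _ hhalf d1)).
      rewrite le_eqVlt; apply/orP; left; apply/eqP; by field.
Qed.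

Lemma tang_decomp (R : realType) (g : geometry) (n : nat) (q w : 'rV[R]_n.+1) :
  model g q -> exists ga v, tang g q v /\ w = ga *: q + v.
Proof.
case: g => /= mq.
- exists (w ord0 ord0), (w - w ord0 ord0 *: q); split; last by rewrite addrC subrK.
  by rewrite !mxE mq mulr1 subrr.
- exists (dotv q w), (w - dotv q w *: q); split; last by rewrite addrC subrK.
  by rewrite dotvBr dotvZr mq mulr1 subrr.
- case: mq => mq _.
  exists (- (dotv q w - 2 * (q ord0 ord0 * w ord0 ord0))).
  exists (w - (- (dotv q w - 2 * (q ord0 ord0 * w ord0 ord0))) *: q).
  split; last by rewrite addrC subrK.
  rewrite dotvBr dotvZr !mxE.
  move: mq; set c := dotv q q; set x := q ord0 ord0 => mq.
  have -> : c = 2 * x ^+ 2 - 1 by lra.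
  ring.
Qed.

Lemma thick_full (R : realType) (g : geometry) (n : nat) (P : set 'rV[R]_n.+1)
    (W : {vspace 'rV[R]_n.+1}) :
  P `<=` @model R g n -> thick g P -> (forall x, P x -> x \in W) -> forall w, w \in W.
Proof.
move=> Pm [q [Pq [e [e0 he]]]] PW w.
have mq := Pm q Pq.
have [ga [v [tv ->]]] := tang_decomp w mq.
have [al [be [be0 [mp dp]]]] := near_pts mq e0 tv.
have Pp := he _ mp dp.
have qW := PW _ Pq.
have vW : v \in W.
  have : be *: v \in W.
    have -> : be *: v = (al *: q + be *: v) - al *: q by rewrite addrC addKr.
    by rewrite memvB ?memvZ // PW.
  by move=> h; rewrite -(scalerK be0 v) memvZ.
by rewrite memvD ?memvZ.
Qed.

Lemma descent (P : nat -> Prop) N : P 0%N -> ~ P N -> exists k, P k /\ ~ P k.+1.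
Proof.
move=> P0; elim: N => [|N IH] hN; first by [].
case: (pselect (P N)) => hP; first by exists N.
exact: IH.
Qed.

Lemma dim_rV (R : realType) (n : nat) : \dim (fullv : {vspace 'rV[R]_n.+1}) = n.+1.
Proof. by rewrite dimvf /dim /= mul1n. Qed.

Lemma free_size_le (R : realType) (n : nat) (X : seq 'rV[R]_n.+1) :
  free X -> (size X <= n.+1)%N.
Proof.
move=> /eqnP <-; have := dimvS (subvf <<X>>%VS); by rewrite dim_rV.
Qed.

Lemma hull_basis (R : realType) (n : nat) (S : set 'rV[R]_n.+1) (U : {vspace 'rV[R]_n.+1}) :
  is_hull S U ->
  exists X : seq 'rV[R]_n.+1, (forall x, x \in X -> S x) /\ free X /\ (<<X>> = U)%VS.
Proof.
move=> [hS hU].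
pose P k := exists X : seq 'rV[R]_n.+1, size X = k /\ free X /\ (forall x, x \in X -> S x).
have P0 : P 0%N by exists [::]; rewrite nil_free.
have PN : ~ P n.+2.
  move=> [X [sX [fX _]]]; have := free_size_le fX; rewrite sX.
  by rewrite ltnn.
have [k [[X [sX [fX XS]]] nPk]] := descent P0 PN.
have SX : forall s, S s -> s \in <<X>>%VS.
  move=> s Ss; apply/negPn/negP => ns; apply: nPk.
  exists (s :: X); split; first by rewrite /= sX.
  split; first by rewrite free_cons ns fX.
  by move=> x; rewrite in_cons => /orP [/eqP ->|/XS].
exists X; split => //; split => //.
apply/eqP; rewrite eqEsubv; apply/andP; split.
- by apply/span_subvP => x /XS /hS.
- exact: hU.
Qed.

Definition cbnd (R : realType) (n m : nat) (B : m.-tuple 'rV[R]_n.+1) (i : 'I_m) : R :=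
  \sum_(j < n.+1) `|coord B i (delta_mx ord0 j)|.

Lemma comp_lt (R : realType) (n : nat) (d : 'rV[R]_n.+1) r j :
  0 < r -> dotv d d < r * r -> `|d ord0 j| < r.
Proof.
move=> r0 h.
have h2 : d ord0 j ^+ 2 < r ^+ 2.
  by apply: le_lt_trans (dotv_comp d j) _; rewrite expr2.
rewrite -(ltr_pXn2r (n := 2)) ?nnegrE ?normr_ge0 ?ltW // real_normK ?num_real //.
Qed.

Lemma coord_bound (R : realType) (n m : nat) (B : m.-tuple 'rV[R]_n.+1) i d r :
  0 < r -> dotv d d < r * r -> `|coord B i d| <= cbnd B i * r.
Proof.
move=> r0 hd.
rewrite [in X in coord B i X](row_sum_delta d) linear_sum /= /cbnd mulr_suml.
apply: (le_trans (ler_norm_sum _ _ _)); apply: ler_sum => j _.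
rewrite linearZ /= normrM mulrC ler_wpM2l //.
exact: ltW (comp_lt j r0 hd).
Qed.

Lemma span_full (R : realType) (n : nat) (B : (n.+1).-tuple 'rV[R]_n.+1) :
  free B -> forall v, v \in <<B>>%VS.
Proof.
move=> fB v.
have bB : basis_of fullv B.
  by rewrite basisEfree fB subvf dim_rV size_tuple leqnn.
by rewrite (span_basis bB) memvf.
Qed.

Lemma int_cone (R : realType) (n : nat) (K : set 'rV[R]_n.+1)
    (B : (n.+1).-tuple 'rV[R]_n.+1) (c : 'I_n.+1 -> R) :
  K 0 -> (forall x y, K x -> K y -> K (x + y)) ->
  (forall x a, 0 <= a -> K x -> K (a *: x)) ->
  free B -> (forall i : 'I_n.+1, K (B`_i)) -> (forall i, 0 < c i) ->
  exists r, 0 < r /\ forall z, dotv (z - \sum_i c i *: B`_i) (z - \sum_i c i *: B`_i) < r * r -> K z.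
Proof.
move=> K0 KD KZ fB KB cp.
set y := \sum_i c i *: B`_i.
set s := \sum_(i < n.+1) (cbnd B i + 1) / c i.
have tp : forall i, 0 < (cbnd B i + 1) / c i.
  move=> i; rewrite divr_gt0 // ltr_wpDl // /cbnd; exact: sumr_ge0.
have ti : forall i, (cbnd B i + 1) / c i <= s.
  move=> i; rewrite /s (bigD1 i) //= lerDl; apply: sumr_ge0 => j _; exact: ltW.
have sp : 0 < s by apply: lt_le_trans (ti ord0); exact: tp.
exists s^-1; split; first by rewrite invr_gt0.
move=> z hz.
have rp : 0 < s^-1 by rewrite invr_gt0.
have hc : forall i, 0 <= c i + coord B i (z - y).
  move=> i; have h1 := coord_bound B i rp hz.
  have h2 : s^-1 * (cbnd B i + 1) <= c i.
    have := ti i; rewrite ler_pdivrMr // => h.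
    by rewrite mulrC ler_pdivrMr // mulrC.
  have h3 := ler_norm (- coord B i (z - y)); rewrite normrN in h3.
  have h4 : 0 <= cbnd B i by rewrite /cbnd; exact: sumr_ge0.
  nra.
have -> : z = \sum_i (c i + coord B i (z - y)) *: B`_i.
  rewrite [in LHS](_ : z = y + (z - y)); last by rewrite addrC subrK.
  rewrite [in LHS](coord_span (span_full fB (z - y))) /y -big_split /=.
  by apply: eq_bigr => i _; rewrite scalerDl.
elim/big_ind: _ => //.
by move=> i _; apply: KZ.
Qed.

Lemma cons_sum (R : realType) (n : nat) (q : 'rV[R]_n.+1) (X : n.-tuple 'rV[R]_n.+1)
    (c : 'I_n.+1 -> R) :
  \sum_(i < n.+1) c i *: [tuple of q :: X]`_i =
  c ord0 *: q + \sum_(k < n) c (lift ord0 k) *: X`_k.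
Proof. by rewrite big_ord_recl /=; congr (_ + _); apply: eq_bigr => k _; rewrite lift0. Qed.

Lemma sum_in_span (R : realType) (n : nat) (X : n.-tuple 'rV[R]_n.+1) (c : 'I_n -> R) :
  \sum_(k < n) c k *: X`_k \in <<X>>%VS.
Proof. by apply: rpred_sum => k _; rewrite memvZ // memv_span // mem_nth // size_tuple. Qed.

Lemma decomp_q (R : realType) (n : nat) (X : n.-tuple 'rV[R]_n.+1) q v :
  free X -> q \notin <<X>>%VS -> exists d u, u \in <<X>>%VS /\ v = d *: q + u.
Proof.
move=> fX nq.
have fB : free [tuple of q :: X] by rewrite /= free_cons nq fX.
have := coord_span (span_full fB v); rewrite cons_sum => ->.
by eexists; eexists; split; last reflexivity; exact: sum_in_span.
Qed.

Lemma cg_comb (R : realType) (g : geometry) (n : nat) (X : n.-tuple 'rV[R]_n.+1) q e :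
  model g q -> (forall k : 'I_n, model g (X`_k)) -> q \notin <<X>>%VS -> 0 < e ->
  cg g (e *: q + \sum_(k < n) X`_k).
Proof.
move=> mq mX nq e0.
case: (pselect (g = Spherical)) => [gS|gS].
  move: mq mX; rewrite gS => mq mX /=; apply/eqP => h.
  move/negP: nq; apply.
  have -> : q = e^-1 *: (- \sum_(k < n) X`_k).
    have hq : e *: q = - \sum_(k < n) X`_k.
      by rewrite -[e *: q](addrK (\sum_(k < n) X`_k)) h sub0r.
    by rewrite -hq scalerK ?gt_eqF.
  rewrite memvZ // memvN; apply: rpred_sum => k _.
  by rewrite memv_span // mem_nth // size_tuple.
elim/big_rec: _ => [|k x _ h]; first by rewrite addr0; apply: cg_scale => //; exact: model_cg.
by rewrite addrCA; apply: cg_add => //; exact: model_cg.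
Qed.

Lemma int_transfer (R : realType) (g : geometry) (n : nat) (A : set 'rV[R]_n.+1) y r c :
  0 < r -> (forall z, dotv (z - y) (z - y) < r * r -> kone A z) ->
  0 < c -> model g (c *: y) -> intX g (@model R g n `&` kone A) (c *: y).
Proof.
move=> r0 hz c0 my.
have Ky : kone A y by apply: hz; rewrite subrr dotv0r mulr_gt0.
split; first by split => //; apply: koneZ => //; exact: ltW.
exists (c * r); split; first by rewrite mulr_gt0.
move=> z mz dz; split => //.
have -> : z = c *: (c^-1 *: z) by rewrite scalerKV ?gt_eqF.
apply: koneZ; first exact: ltW.
apply: hz.
have -> : c^-1 *: z - y = c^-1 *: (z - c *: y) by rewrite scalerBr scalerK ?gt_eqF.
rewrite dotvZl dotvZr mulrA.
have cc : 0 < c^-1 * c^-1 by rewrite mulr_gt0 // invr_gt0.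
rewrite -(ltr_pM2l cc) in dz.
apply: lt_le_trans dz _.
have cn : c != 0 by rewrite gt_eqF.
rewrite le_eqVlt; apply/orP; left; apply/eqP; by field.
Qed.

Definition ccoef (R : realType) (n : nat) (a : R) (f : 'I_n -> R) (i : 'I_n.+1) : R :=
  match unlift ord0 i with Some k => f k | None => a end.

Lemma ccoef0 (R : realType) (n : nat) (a : R) (f : 'I_n -> R) : ccoef a f ord0 = a.
Proof. by rewrite /ccoef unlift_none. Qed.

Lemma ccoefS (R : realType) (n : nat) (a : R) (f : 'I_n -> R) k : ccoef a f (lift ord0 k) = f k.
Proof. by rewrite /ccoef liftK. Qed.

Lemma ccoef_pos (R : realType) (n : nat) (a : R) (f : 'I_n -> R) :
  0 < a -> (forall k, 0 < f k) -> forall i, 0 < ccoef a f i.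
Proof. by move=> a0 f0 i; rewrite /ccoef; case: (unlift ord0 i). Qed.

Lemma pair_int (R : realType) (g : geometry) (n : nat) (A1 A2 : set 'rV[R]_n.+1)
    (X : n.-tuple 'rV[R]_n.+1) q1 q2 d u :
  free X -> (forall k : 'I_n, model g (X`_k)) ->
  (forall k : 'I_n, kone A1 (X`_k)) -> (forall k : 'I_n, kone A2 (X`_k)) ->
  model g q1 -> kone A1 q1 -> q1 \notin <<X>>%VS -> kone A2 q2 -> q2 \notin <<X>>%VS ->
  0 < d -> u \in <<X>>%VS -> q1 = d *: q2 + u ->
  exists p, intX g (@model R g n `&` kone A1) p /\ intX g (@model R g n `&` kone A2) p.
Proof.
move=> fX mX K1X K2X mq1 K1q1 nq1 K2q2 nq2 d0 uX hq.
set w := fun k => coord X k u.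
have hu : u = \sum_k w k *: X`_k by exact: coord_span.
set m := 1 + \sum_k `|w k|.
have m0 : 0 < m by rewrite /m ltr_wpDr // sumr_ge0 // => k _; exact: normr_ge0.
set e := m^-1.
have e0 : 0 < e by rewrite invr_gt0.
have ew : forall k, 0 < 1 + e * w k.
  move=> k; have : `|w k| < m.
    have : `|w k| <= \sum_k0 `|w k0|.
      by rewrite (bigD1 k) //= lerDl sumr_ge0 // => j _; exact: normr_ge0.
    rewrite /m; lra.
  have em : e * m = 1 by rewrite /e mulVf ?gt_eqF.
  rewrite -(ltr_pM2l e0) em => h.
  have := ler_norm (- w k); rewrite normrN => h2.
  have : e * (- w k) <= e * `|w k| by rewrite ler_wpM2l // ltW.
  rewrite mulrN; lra.
set y := e *: q1 + \sum_(k < n) X`_k.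
have fB1 : free [tuple of q1 :: X] by rewrite /= free_cons nq1 fX.
have fB2 : free [tuple of q2 :: X] by rewrite /= free_cons nq2 fX.
have KB1 : forall i : 'I_n.+1, kone A1 ([tuple of q1 :: X]`_i).
  by move=> i; case: (unliftP ord0 i) => [k ->|->] //; exact: (K1X k).
have KB2 : forall i : 'I_n.+1, kone A2 ([tuple of q2 :: X]`_i).
  by move=> i; case: (unliftP ord0 i) => [k ->|->] //; exact: (K2X k).
have [r1 [r1p h1]] := @int_cone R n (kone A1) _ _ (@kone0 R n A1) (@koneD R n A1) (fun x a a0 h => @koneZ R n A1 x a a0 h) fB1
   KB1 (ccoef_pos (f := fun _ => 1) e0 (fun _ => ltr01)).
have [r2 [r2p h2]] := @int_cone R n (kone A2) _ _ (@kone0 R n A2) (@koneD R n A2) (fun x a a0 h => @koneZ R n A2 x a a0 h) fB2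
   KB2 (ccoef_pos (a := e * d) (f := fun k => 1 + e * w k) (mulr_gt0 e0 d0) ew).
rewrite cons_sum ccoef0 in h1; rewrite cons_sum ccoef0 in h2.
have E1 : \sum_(k < n) ccoef e (fun _ => 1) (lift ord0 k) *: X`_k = \sum_(k < n) X`_k.
  by apply: eq_bigr => k _; rewrite ccoefS scale1r.
have E2 : (e * d) *: q2 + \sum_(k < n) ccoef (e * d) (fun k => 1 + e * w k) (lift ord0 k) *: X`_k = y.
  rewrite /y hq hu scalerDr scaler_sumr -addrA; congr (_ + _); first by rewrite scalerA.
  rewrite -big_split /=; apply: eq_bigr => k _.
  by rewrite ccoefS scalerDl scale1r scalerA addrC.
rewrite E1 -/y in h1; rewrite E2 in h2.
have cy : cg g y by apply: cg_comb.
have [c [c0 mc]] := cg_norm cy.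
exists (c *: y); split.
  exact: (int_transfer r1p h1 c0 mc).
exact: (int_transfer r2p h2 c0 mc).
Qed.

Lemma tile_facts (R : realType) (g : geometry) (n : nat) (T : set (set 'rV[R]_n.+1)) P :
  partial_tessellation g T -> T P ->
  exists A, P = @model R g n `&` kone A /\ thick g P.
Proof.
move=> [Tt _] TP; have [[A [_ [_ [PA _]]]] th] := Tt P TP.
by exists A; split.
Qed.

Lemma tile_out (R : realType) (g : geometry) (n : nat) (T : set (set 'rV[R]_n.+1)) P
    (U : {vspace 'rV[R]_n.+1}) :
  partial_tessellation g T -> T P -> \dim U = n -> exists q, P q /\ q \notin U.
Proof.
move=> hT TP dU.
case: (pselect (exists q, P q /\ q \notin U)) => // hn; exfalso.
have [A [PA th]] := tile_facts hT TP.
have PU : forall x, P x -> x \in U.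
  move=> x Px; apply/negPn/negP => nx; apply: hn; by exists x.
have Pm : P `<=` @model R g n by rewrite PA => x [].
have hf := thick_full Pm th PU.
have : (fullv <= U)%VS by apply/subvP => v _; exact: hf.
move/dimvS; rewrite dim_rV dU ltnn //.
Qed.

Lemma two_tiles (R : realType) (g : geometry) (n : nat) (T : set (set 'rV[R]_n.+1))
    (S : set 'rV[R]_n.+1) (X : n.-tuple 'rV[R]_n.+1) Pa Pb qa qb d u :
  partial_tessellation g T -> T Pa -> T Pb -> Pa <> Pb ->
  free X -> (forall k : 'I_n, S (X`_k)) -> S `<=` Pa -> S `<=` Pb ->
  Pa qa -> qa \notin <<X>>%VS -> Pb qb -> qb \notin <<X>>%VS ->
  0 < d -> u \in <<X>>%VS -> qa = d *: qb + u -> False.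
Proof.
move=> hT Ta Tb nab fX XS SPa SPb Paq nqa Pbq nqb d0 uX hq.
have [Aa [PAa _]] := tile_facts hT Ta.
have [Ab [PAb _]] := tile_facts hT Tb.
have disj := hT.2 _ _ Ta Tb nab.
have Xa : forall k : 'I_n, Pa (X`_k) by move=> k; apply: SPa.
have Xb : forall k : 'I_n, Pb (X`_k) by move=> k; apply: SPb.
move: Paq Pbq Xa Xb disj; rewrite PAa PAb => -[mqa Kqa] [_ Kqb] Xa Xb disj.
have [p [p1 p2]] := pair_int fX (fun k => (Xa k).1) (fun k => (Xa k).2) (fun k => (Xb k).2)
  mqa Kqa nqa Kqb nqb d0 uX hq.
have : (intX g (@model R g n `&` kone Aa) `&` intX g (@model R g n `&` kone Ab)) p by [].
by rewrite disj.
Qed.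

Lemma three_tiles (R : realType) (g : geometry) (n : nat) (T : set (set 'rV[R]_n.+1))
    (S : set 'rV[R]_n.+1) (X : n.-tuple 'rV[R]_n.+1) P1 P2 P3 :
  partial_tessellation g T -> T P1 -> T P2 -> T P3 ->
  P1 <> P2 -> P1 <> P3 -> P2 <> P3 ->
  free X -> (forall k : 'I_n, S (X`_k)) -> S `<=` P1 -> S `<=` P2 -> S `<=` P3 ->
  \dim <<X>>%VS = n -> False.
Proof.
move=> hT T1 T2 T3 n12 n13 n23 fX XS S1 S2 S3 dX.
have [q1 [P1q nq1]] := tile_out hT T1 dX.
have [q2 [P2q nq2]] := tile_out hT T2 dX.
have [q3 [P3q nq3]] := tile_out hT T3 dX.
have [d2 [u2 [u2X h2]]] := decomp_q q2 fX nq1.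
have [d3 [u3 [u3X h3]]] := decomp_q q3 fX nq1.
have nz : forall d u q, u \in <<X>>%VS -> q \notin <<X>>%VS -> q = d *: q1 + u -> d != 0.
  move=> d u q uX nq hq; apply/eqP => d0; move: nq; rewrite hq d0 scale0r add0r.
  by rewrite uX.
have d2n := nz _ _ _ u2X nq2 h2; have d3n := nz _ _ _ u3X nq3 h3.
case: (ltrgt0P d2) => [d2p|d2m|d2z]; last by rewrite d2z eqxx in d2n.
  by apply: (two_tiles hT T2 T1 (nesym n12) fX XS S2 S1 P2q nq2 P1q nq1 d2p u2X h2).
case: (ltrgt0P d3) => [d3p|d3m|d3z]; last by rewrite d3z eqxx in d3n.
  by apply: (two_tiles hT T3 T1 (nesym n13) fX XS S3 S1 P3q nq3 P1q nq1 d3p u3X h3).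
have dp : 0 < d2 / d3.
  have a2 : 0 < - d2 by rewrite oppr_gt0.
  have a3 : 0 < - d3 by rewrite oppr_gt0.
  by have := divr_gt0 a2 a3; rewrite invrN mulrNN.
apply: (two_tiles hT T2 T3 n23 fX XS S2 S3 P2q nq2 P3q nq3 dp
         (u := u2 - (d2 / d3) *: u3)).
  by rewrite memvB // memvZ.
rewrite h2 h3 scalerDr scalerA mulfVK //.
by rewrite -addrA [_ *: u3 + _]addrC subrK.
Qed.

Theorem proposition4p4 (R : realType) (g : geometry) (n : nat)
    (T : set (set 'rV[R]_(n.+1))) :
  partial_tessellation g T -> locally_finite g T ->
  forall S, side g T S ->
  exists T1 T2, T T1 /\ T T2 /\ T1 <> T2 /\ S `<=` T1 /\ S `<=` T2 /\
    (forall P, T P -> S `<=` P -> P = T1 \/ P = T2) /\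
    S = T1 `&` T2.
Proof.
move=> hT _ S [[[F [FT [[P1 FP1] SF]]] _] [U [hull cod]]].
have dU : \dim U = n.
  have hle : (\dim U <= n.+1)%N by have := dimvS (subvf U); rewrite dim_rV.
  have := subnK hle; rewrite -cod add1n; exact: succn_inj.
have [X0 [X0S [fX0 sX0]]] := hull_basis hull.
have sz : size X0 == n by rewrite -(eqnP fX0) sX0 dU.
pose X : n.-tuple 'rV[R]_n.+1 := Tuple sz.
have fX : free X by [].
have XS : forall k : 'I_n, S (X`_k).
  by move=> k; apply: X0S; rewrite mem_nth // (eqP sz).
have dX : \dim <<X>>%VS = n by rewrite /= sX0.
have SU : forall x, S x -> x \in U by case: hull.
have SinF : forall P, F P -> S `<=` P by move=> P FP x; rewrite SF => /(_ P FP).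
have T1 := FT _ FP1.
have [q [P1q nq]] := tile_out hT T1 dU.
have [P2 [FP2 nP2q]] : exists P2, F P2 /\ ~ P2 q.
  apply: contrapT => h; move/negP: nq; apply; apply: SU; rewrite SF => P FP.
  by apply: contrapT => nPq; apply: h; exists P.
have T2 := FT _ FP2.
have n12 : P1 <> P2 by move=> e; apply: nP2q; rewrite -e.
have uniq2 : forall P, T P -> S `<=` P -> P = P1 \/ P = P2.
  move=> P TP SP.
  case: (pselect (P = P1)) => [->|h1]; first by left.
  case: (pselect (P = P2)) => [->|h2]; first by right.
  exfalso; apply: (three_tiles hT T1 T2 TP n12 (nesym h1) (nesym h2) fX XS
    (SinF _ FP1) (SinF _ FP2) SP dX).
exists P1, P2; split; first exact: T1.
split; first exact: T2.
split; first exact: n12.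
split; first exact: SinF.
split; first exact: SinF.
split; first exact: uniq2.
apply/seteqP; split => [x Sx|x [x1 x2]]; first by split; apply: SinF.
rewrite SF => P FP; case: (uniq2 P (FT _ FP) (SinF _ FP)) => ->; by [].
Qed.
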